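(* Let $X$ be a Banach space. If $X$ contains a ccs Daugavet point, then $X$ has the strong diameter 2 property (every convex combination of slices of $B_X$ has diameter $2$); in particular $X$ is not strongly regular.
   Context: $X$ is a real or complex Banach space with closed unit ball $B_X$ and unit sphere $S_X$. A slice of $B_X$ is a non-empty set $S(x^*,\delta)=\{y\in B_X:\operatorname{Re}x^*(y)>\|x^*\|-\delta\}$ with $x^*\in X^*$, $\delta>0$. A convex combination of slices (ccs) of $B_X$ is a set $\sum_{i=1}^n\lambda_iS_i$ where $\lambda_i\in(0,1]$, $\sum_i\lambda_i=1$ and each $S_i$ is a slice of $B_X$. An element $x\in S_X$ is a ccs Daugavet point if $\sup_{y\in C}\|x-y\|=2$ for every ccs $C$ of $B_X$. $X$ is strongly regular if every non-empty closed bounded convex subset of $X$ contains convex combinations of its slices of arbitrarily small diameter. *)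

(* Defs.v *)
From HB Require Import structures.
From mathcomp Require Import all_boot all_order all_algebra.
From mathcomp Require Import all_classical all_reals all_analysis.
From mathcomp Require Import complex.
Set Implicit Arguments. Unset Strict Implicit. Unset Printing Implicit Defensive.
Import Order.TTheory GRing.Theory Num.Theory.
Import numFieldNormedType.Exports.
Local Open Scope ring_scope.
Local Open Scope classical_set_scope.

(* Scalars: a numFieldType K (below: K = R for real spaces, K = R[i] for
   complex spaces, R : realType).  [re] is the real part map
   (identity for K = R, Num.Re for K = R[i]). *)

Section BanachDefs.
Variables (K : numFieldType) (re : K -> K) (X : normedModType K).

Definition is_supremum (A : set K) (M : K) : Prop :=
  (forall a, A a -> a <= M) /\
  (forall e : K, 0 < e -> exists2 a, A a & M - e < a).

Definition unit_ball : set X := [set y | `|y| <= 1].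
Definition unit_sphere : set X := [set y | `|y| = 1].

Definition dual_elt (f : {linear X -> K^o}) : Prop := continuous f.

Definition dual_norm_is (f : {linear X -> K^o}) (M : K) : Prop :=
  is_supremum [set `|f y| | y in unit_ball] M.

Definition is_slice (S : set X) : Prop :=
  exists (f : {linear X -> K^o}) (M delta : K),
    [/\ dual_elt f, dual_norm_is f M, 0 < delta,
        S = [set y | unit_ball y /\ M - delta < re (f y)] & S !=set0].

Definition is_slice_of (A : set X) (S : set X) : Prop :=
  exists (f : {linear X -> K^o}) (M delta : K),
    [/\ dual_elt f, is_supremum [set re (f y) | y in A] M, 0 < delta,
        S = [set y | A y /\ M - delta < re (f y)] & S !=set0].

Definition is_ccs_with (isS : set X -> Prop) (C : set X) : Prop :=
  exists (n : nat) (lam : 'I_n -> K) (S : 'I_n -> set X),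
    [/\ (forall i, 0 < lam i <= 1), \sum_(i < n) lam i = 1,
        (forall i, isS (S i)) &
        C = [set x | exists y : 'I_n -> X,
                       (forall i, S i (y i)) /\ x = \sum_(i < n) lam i *: y i]].

Definition is_ccs (C : set X) : Prop := is_ccs_with is_slice C.

Definition diam_is (C : set X) (d : K) : Prop :=
  is_supremum [set `|y - z| | y in C & z in C] d.

Definition ccs_daugavet_point (x : X) : Prop :=
  unit_sphere x /\
  forall C, is_ccs C -> is_supremum [set `|x - y| | y in C] 2.

Definition SD2P : Prop := forall C, is_ccs C -> diam_is C 2.

Definition convex_subset (A : set X) : Prop :=
  forall x y t, A x -> A y -> 0 <= t <= 1 -> A (t *: x + (1 - t) *: y).

Definition bounded_subset (A : set X) : Prop :=
  exists M : K, forall x, A x -> `|x| <= M.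

Definition strongly_regular : Prop :=
  forall A : set X, A !=set0 -> closed A -> bounded_subset A -> convex_subset A ->
    forall e : K, 0 < e ->
      exists C d, [/\ is_ccs_with (is_slice_of A) C, C `<=` A, diam_is C d & d < e].

End BanachDefs.

Definition realRe (R : realType) : R -> R := fun x => x.
Definition cplxRe (R : realType) : R[i] -> R[i] := fun z => Num.Theory.Re z.

(* Main.v *)
Set Warnings "-all".
Require Import Defs.
From HB Require Import structures.
From mathcomp Require Import all_boot all_order all_algebra.
From mathcomp Require Import all_classical all_reals all_analysis.
From mathcomp Require Import complex.
From mathcomp Require Import ring.
Import Order.TTheory GRing.Theory Num.Theory.
Import numFieldNormedType.Exports.
Local Open Scope ring_scope.
Local Open Scope classical_set_scope.

Section NegF.
Variables (K : numFieldType) (X : normedModType K) (f : {linear X -> K^o}).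
Definition negf := fun x => - f x.
Lemma negf_lin : linear negf. Proof. by move=> a u v; rewrite /negf linearP opprD scalerN. Qed.
HB.instance Definition _ := GRing.isLinear.Build K X K^o *:%R negf negf_lin.
End NegF.
Arguments negf {K X} f _.

Section Gen.
Variables (K : numFieldType) (re : K -> K) (X : normedModType K).
Hypothesis Hneg : forall z, re (- z) = - re z.
Hypothesis Hle : forall z, re z <= `|z|.
Hypothesis Hrot : forall z : K, exists u : K, `|u| = 1 /\ re (u * z) = `|z|.

Lemma slice_ball (S : set X) (y : X) : is_slice re S -> S y -> `|y| <= 1.
Proof. by move=> [f [M [d [_ _ _ -> _]]]] [] . Qed.

Lemma ccs_ball (C : set X) (y : X) : is_ccs re C -> C y -> `|y| <= 1.
Proof.
move=> [n [lam [S [Hlam Hsum HS ->]]]] [z [Hz ->]].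
apply: (le_trans (ler_norm_sum _ _ _)).
rewrite -Hsum; apply: ler_sum => i _.
rewrite normrZ.
have [l0 l1] := andP (Hlam i).
rewrite (ger0_norm (ltW l0)).
rewrite -{2}(mulr1 (lam i)); apply: ler_wpM2l; [exact: ltW|].
exact: slice_ball (HS i) (Hz i).
Qed.

Lemma neg_slice (S : set X) : is_slice re S -> is_slice re [set y | S (- y)].
Proof.
move=> [f [M [d [cf nf d0 SE [s Ss]]]]].
exists (negf f), M, d; split => //.
- by move=> x; apply: continuousN; exact: cf.
- case: nf => h1 h2; split.
    by move=> _ [y yb <-]; rewrite /negf normrN; apply: h1; exists y.
  move=> e e0; have [_ [y yb <-] lt] := h2 e e0.
  by exists (`|negf f y|); [exists y|rewrite /negf normrN].
- rewrite SE; apply/seteqP; split => y /=.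
    by rewrite /unit_ball /= normrN /negf linearN.
  by rewrite /unit_ball /= normrN /negf linearN.
- by exists (- s) => /=; rewrite opprK.
Qed.

Lemma split_l n (j : 'I_n) : fintype.split (lshift n j) = inl j.
Proof. exact: (unsplitK (inl j)). Qed.
Lemma split_r n (j : 'I_n) : fintype.split (rshift n j) = inr j.
Proof. exact: (unsplitK (inr j)). Qed.

Lemma ccs_double (C : set X) : is_ccs re C -> exists D : set X, is_ccs re D /\
  forall d, D d -> exists c1 c2, C c1 /\ C c2 /\ c1 - c2 = 2 *: d.
Proof.
move=> [n [lam [S [Hlam Hsum HS CE]]]].
have two0 : (2 : K) != 0 by rewrite pnatr_eq0.
pose lam' (i : 'I_(n+n)) := match fintype.split i with inl j => lam j / 2 | inr j => lam j / 2 end.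
pose S' (i : 'I_(n+n)) := match fintype.split i with inl j => S j | inr j => [set y | S j (- y)] end.
exists [set x | exists y : 'I_(n+n) -> X, (forall i, S' i (y i)) /\ x = \sum_(i < n+n) lam' i *: y i]; split.
- exists (n+n), lam', S'; split => //.
  + move=> i; rewrite /lam'; case: fintype.split => j; have [l0 l1] := andP (Hlam j);
      (apply/andP; split; [by rewrite divr_gt0|
       rewrite ler_pdivrMr // mul1r; apply: le_trans l1 _; by rewrite ler1n]).
  + rewrite big_split_ord /=.
    have -> : \sum_(i < n) lam' (lshift n i) = (\sum_(i < n) lam i) / 2.
      by rewrite big_distrl /=; apply: eq_bigr => i _; rewrite /lam' split_l.
    have -> : \sum_(i < n) lam' (rshift n i) = (\sum_(i < n) lam i) / 2.
      by rewrite big_distrl /=; apply: eq_bigr => i _; rewrite /lam' split_r.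
    by rewrite Hsum -mulrDl -[1 + 1]/(2%:R) divff.
  + move=> i; rewrite /S'; case: fintype.split => j; [exact: HS| exact: neg_slice].
- move=> d [y [Hy ->]].
  exists (\sum_(j<n) lam j *: y (lshift n j)), (\sum_(j<n) lam j *: - y (rshift n j)); split; [|split].
  + rewrite CE; exists (fun j => y (lshift n j)); split => // j.
    by have := Hy (lshift n j); rewrite /S' split_l.
  + rewrite CE; exists (fun j => - y (rshift n j)); split => // j.
    by have := Hy (rshift n j); rewrite /S' split_r /=.
  + rewrite big_split_ord /= scalerDr !scaler_sumr.
    have E : forall j, 2 *: (lam' (lshift n j) *: y (lshift n j)) = lam j *: y (lshift n j).
      by move=> j; rewrite /lam' split_l scalerA mulrC divfK.
    have E' : forall j, 2 *: (lam' (rshift n j) *: y (rshift n j)) = lam j *: y (rshift n j).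
      by move=> j; rewrite /lam' split_r scalerA mulrC divfK.
    rewrite (eq_bigr _ (fun j _ => E j)) (eq_bigr _ (fun j _ => E' j)).
    congr (_ + _); rewrite -sumrN; apply: eq_bigr => j _; by rewrite scalerN opprK.
Qed.

Lemma gen_SD2P : (exists x : X, ccs_daugavet_point re x) -> SD2P re X.
Proof.
move=> [x [x1 Hx]] C HC; split.
  move=> _ [y Cy [z Cz <-]].
  apply: (le_trans (ler_normB _ _)).
  by rewrite -[2]/(1 + 1); apply: lerD; apply: ccs_ball HC _.
move=> e e0.
have [D [HD HDC]] := ccs_double _ HC.
have e20 : 0 < e / 2 by rewrite divr_gt0.
have [_ [d Dd <-] lt] := (Hx D HD).2 _ e20.
have [c1 [c2 [C1 [C2 E]]]] := HDC d Dd.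
exists (`|c1 - c2|); first by exists c1 => //; exists c2.
rewrite E normrZ (ger0_norm (ler0n _ 2)).
have h : `|x - d| <= 1 + `|d| by rewrite -x1; apply: ler_normB.
have h2 : 2 - e / 2 < 1 + `|d| := lt_le_trans lt h.
have -> : 2 - e = 2 * (2 - e / 2) - 2.
  have two0 : (2 : K) != 0 by rewrite pnatr_eq0.
  rewrite mulrBr mulrCA divff // mulr1. 
  ring.
have -> : 2 * `|d| = 2 * (1 + `|d|) - 2 by rewrite mulrDr mulr1 addrAC subrr add0r.
by rewrite ltrD2r ltr_pM2l.
Qed.

Lemma sliceof_slice (S : set X) : is_slice_of re (unit_ball (X:=X)) S -> is_slice re S.
Proof.
move=> [f [M [d [cf [h1 h2] d0 SE Sn]]]].
exists f, M, d; split => //; split.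
  move=> _ [y yb <-].
  have [u [u1 ru]] := Hrot (f y).
  rewrite -ru -linearZ /=; apply: h1; exists (u *: y) => //.
  by rewrite /unit_ball /= normrZ u1 mul1r.
move=> e e0; have [_ [y yb <-] lt] := h2 e e0.
exists (`|f y|); first by exists y.
exact: lt_le_trans lt (Hle _).
Qed.

Lemma ball_closed : closed (unit_ball (X:=X)).
Proof.
move=> y cly; rewrite /unit_ball /=.
apply/negPn/negP => ny.
have lt1 : 1 < `|y| by rewrite real_ltNge ?num_real.
have r0 : 0 < `|y| - 1 by rewrite subr_gt0.
have [z [zb yz]] := cly _ (nbhsx_ballx y _ r0).
move: yz; rewrite -ball_normE /ball_ /= => yz.
have : `|y| < `|y| .
  apply: (le_lt_trans (_ : `|y| <= `|y - z| + `|z|)).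
    by rewrite -{1}(subrK z y) ler_normD.
  rewrite -{1}(subrK 1 `|y|); apply: ltr_leD => //.
by rewrite ltxx.
Qed.

Lemma gen_notSR : SD2P re X -> ~ strongly_regular re X.
Proof.
move=> Hsd Hsr.
have [C [d [HC _ Hd dlt]]] : exists C d, [/\ is_ccs_with (is_slice_of re (unit_ball (X:=X))) C,
    C `<=` unit_ball (X:=X), diam_is C d & d < 1].
  apply: Hsr => //.
  - by exists 0; rewrite /unit_ball /= normr0 ler01.
  - exact: ball_closed.
  - by exists 1.
  - move=> a b t ha hb /andP[t0 t1]; rewrite /unit_ball /=.
    apply: (le_trans (ler_normD _ _)); rewrite !normrZ ger0_norm // ger0_norm ?subr_ge0 //.
    apply: (le_trans (_ : _ <= t + (1 - t))); last by rewrite addrC subrK.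
    apply: lerD.
      by rewrite -{2}(mulr1 t); apply: ler_wpM2l.
    by rewrite -{2}(mulr1 (1 - t)); apply: ler_wpM2l; rewrite ?subr_ge0.
have HC' : is_ccs re C.
  move: HC => [n [lam [S [H1 H2 H3 H4]]]]; exists n, lam, S; split => // i.
  exact: sliceof_slice.
have [_ h] := Hsd C HC'.
have [a Ha lta] := h 1 ltr01.
have := Hd.1 a Ha.
move=> ad.
have e1 : (2 - 1 : K) = 1 by ring.
rewrite e1 in lta.
have := lt_trans (lt_le_trans lta ad) dlt.
by rewrite ltxx.
Qed.

End Gen.

Lemma gen_main (K : numFieldType) (re : K -> K) (X : normedModType K) :
  (forall z, re (- z) = - re z) -> (forall z, re z <= `|z|) ->
  (forall z : K, exists u : K, `|u| = 1 /\ re (u * z) = `|z|) ->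
  (exists x : X, ccs_daugavet_point re x) -> SD2P re X /\ ~ strongly_regular re X.
Proof.
move=> H1 H2 H3 Hx.
have hs := @gen_SD2P K re X Hx.
by split => //; apply: (@gen_notSR K re X H2 H3).
Qed.

Theorem mainTheorem2 (R : realType) :
  (forall X : completeNormedModType R,
     (exists x : X, ccs_daugavet_point (@realRe R) x) ->
     SD2P (@realRe R) X /\ ~ strongly_regular (@realRe R) X) /\
  (forall X : completeNormedModType R[i],
     (exists x : X, ccs_daugavet_point (@cplxRe R) x) ->
     SD2P (@cplxRe R) X /\ ~ strongly_regular (@cplxRe R) X).
Proof.
split => X; apply: gen_main.
- by [].
- by move=> z; rewrite /realRe ler_norm.
- move=> z; rewrite /realRe.
  have [z0|z0] := leP 0 z.
    by exists 1; rewrite normr1 mul1r ger0_norm.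
  by exists (-1); rewrite normrN normr1 mulN1r ltr0_norm.
- by move=> z; rewrite /cplxRe raddfN.
- by move=> z; rewrite /cplxRe; exact: (leif_Re_Creal z).1.
- move=> z; rewrite /cplxRe.
  have [->|z0] := eqVneq z 0.
    by exists 1; rewrite normr1 mulr0 normr0 raddf0.
  have nz0 : `|z| != 0 by rewrite normr_eq0.
  exists (z^* / `|z|); split.
    by rewrite normf_div norm_conjC normr_id divff.
  have -> : z^* / `|z| * z = `|z| ^+ 2 / `|z| by rewrite normCK; ring.
  rewrite expr2 mulfK //.
  by apply/Creal_ReP; exact: normr_real.
Qed.
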